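(* Let $R$ be a commutative ring, $M$ an $R$-module having at least one prime submodule, and $X=\mathrm{Spec}(M)$. For each $P\in X$, the stalk $\mathcal{A}_{X,P}$ of the sheaf of rings $\mathcal{A}_X$ is isomorphic to $R_{\mathfrak p}$, where $\mathfrak p=(P:M)$. Moreover, $(X,\mathcal{A}_X)$ is a locally ringed space.
   Context: For a submodule $L$ of an $R$-module $M$, $(L:M)=\{r\in R\mid rM\subseteq L\}$. A submodule $P$ of $M$ is prime if $P\neq M$ and whenever $rm\in P$ ($r\in R$, $m\in M$) then $r\in (P:M)$ or $m\in P$; then $(P:M)$ is a prime ideal. $\mathrm{Spec}(M)$ is the set of prime submodules. For $L\le M$, $V(L)=\{P\in X\mid (P:M)\supseteq (L:M)\}$; these are the closed sets of the Zariski topology on $X$. For open $U\subseteq X$, $\mathrm{Supp}(U)=\{(P:M)\mid P\in U\}$. The sheaf of rings $\mathcal{A}_X$: $\mathcal{A}_X(U)$ is the set of families $(\gamma_{\mathfrak p})_{\mathfrak p\in\mathrm{Supp}(U)}\in\prod_{\mathfrak p\in\mathrm{Supp}(U)}R_{\mathfrak p}$ such that for each $Q\in U$ there exist an open neighbourhood $W\subseteq U$ of $Q$ and $s,a\in R$ with $s\notin (P:M)$ and $\gamma_{(P:M)}=a/s$ for all $P\in W$; operations componentwise, restriction maps restrict families, $\mathcal{A}_X(\emptyset)=0$. *)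

(* Defs.v *)
From mathcomp Require Import all_boot all_algebra.
Set Implicit Arguments. Unset Strict Implicit. Unset Printing Implicit Defensive.
Import GRing.Theory.
Local Open Scope ring_scope.

(* A ring presented by explicit data: carrier, the predicate cutting out the
   elements of the ring inside the carrier, and its operations. *)
Record ring_data := RingData {
  rcar : Type;
  rdom : rcar -> Prop;
  rzero : rcar;
  rone : rcar;
  radd : rcar -> rcar -> rcar;
  rmul : rcar -> rcar -> rcar;
  ropp : rcar -> rcar }.
Arguments rdom : clear implicits.
Arguments radd : clear implicits.
Arguments rmul : clear implicits.
Arguments ropp : clear implicits.

Definition ring_iso (A B : ring_data) : Prop :=
  exists f : rcar A -> rcar B,
    (forall x, rdom A x -> rdom B (f x)) /\
    (forall x y, rdom A x -> rdom A y -> f x = f y -> x = y) /\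
    (forall y, rdom B y -> exists x, rdom A x /\ f x = y) /\
    f (rzero A) = rzero B /\ f (rone A) = rone B /\
    (forall x y, rdom A x -> rdom A y ->
       f (radd A x y) = radd B (f x) (f y) /\
       f (rmul A x y) = rmul B (f x) (f y)) /\
    (forall x, rdom A x -> f (ropp A x) = ropp B (f x)).

Definition ideal (A : ring_data) (I : rcar A -> Prop) : Prop :=
  (forall x, I x -> rdom A x) /\ I (rzero A) /\
  (forall x y, I x -> I y -> I (radd A x y)) /\
  (forall r x, rdom A r -> I x -> I (rmul A r x)).

Definition maximal_ideal (A : ring_data) (I : rcar A -> Prop) : Prop :=
  ideal I /\ ~ I (rone A) /\
  (forall J, ideal J -> (forall x, I x -> J x) -> ~ J (rone A) ->
     forall x, J x -> I x).

Definition local_ring (A : ring_data) : Prop :=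
  exists m : rcar A -> Prop, maximal_ideal m /\
    forall m' : rcar A -> Prop, maximal_ideal m' -> forall x, m' x <-> m x.

Section Localization.
Variables (R : comPzRingType) (p : R -> Prop).

(* the class a/s : all pairs (b,t), t \notin p, with u(at - bs) = 0, u \notin p *)
Definition frac (a s : R) : R * R -> Prop :=
  fun x => ~ p x.2 /\ exists u, ~ p u /\ u * (a * x.2 - x.1 * s) = 0.

Definition is_frac (c : R * R -> Prop) : Prop :=
  exists a s, ~ p s /\ c = frac a s.

Definition loc_add (c d : R * R -> Prop) : R * R -> Prop :=
  fun x => exists a s b t, ~ p s /\ ~ p t /\ c = frac a s /\ d = frac b t /\
                           frac (a * t + b * s) (s * t) x.

Definition loc_mul (c d : R * R -> Prop) : R * R -> Prop :=
  fun x => exists a s b t, ~ p s /\ ~ p t /\ c = frac a s /\ d = frac b t /\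
                           frac (a * b) (s * t) x.

Definition loc_opp (c : R * R -> Prop) : R * R -> Prop :=
  fun x => exists a s, ~ p s /\ c = frac a s /\ frac (- a) s x.

Definition loc_ring : ring_data :=
  RingData is_frac (frac 0 1) (frac 1 1) loc_add loc_mul loc_opp.
End Localization.

Section Spec.
Variables (R : comPzRingType) (M : lmodType R).

Definition submod (N : M -> Prop) : Prop :=
  N 0 /\ (forall x y, N x -> N y -> N (x + y)) /\
  (forall (r : R) x, N x -> N (r *: x)).

Definition colon (N : M -> Prop) : R -> Prop := fun r => forall m, N (r *: m).

Definition prime_submod (P : M -> Prop) : Prop :=
  submod P /\ (exists m, ~ P m) /\
  (forall (r : R) (m : M), P (r *: m) -> colon P r \/ P m).

Definition spec : Type := {P : M -> Prop | prime_submod P}.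

Definition Vset (L : M -> Prop) : spec -> Prop :=
  fun P => forall r, colon L r -> colon (proj1_sig P) r.

Definition zopen (U : spec -> Prop) : Prop :=
  exists L, submod L /\ forall P, U P <-> ~ Vset L P.

Definition Supp (U : spec -> Prop) : (R -> Prop) -> Prop :=
  fun q => exists P, U P /\ q = colon (proj1_sig P).

(* A family (gamma_q)_q of elements of R_q.  Only the values at q \in Supp(U)
   matter for a section over U: sections over U are compared with [agree_on]. *)
Definition family : Type := (R -> Prop) -> (R * R -> Prop).

Definition agree_on (U : spec -> Prop) (g h : family) : Prop :=
  forall q, Supp U q -> g q = h q.

Definition is_sec (U : spec -> Prop) (g : family) : Prop :=
  forall Q, U Q -> exists W, zopen W /\ W Q /\ (forall P, W P -> U P) /\
    exists a s : R, forall P, W P ->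
      ~ colon (proj1_sig P) s /\
      g (colon (proj1_sig P)) = frac (colon (proj1_sig P)) a s.

Definition fam_const (c : R) : family := fun q => frac q c 1.
Definition fam_add (g h : family) : family := fun q => loc_add q (g q) (h q).
Definition fam_mul (g h : family) : family := fun q => loc_mul q (g q) (h q).
Definition fam_opp (g : family) : family := fun q => loc_opp q (g q).

Section Stalk.
Variable P : spec.

Definition germ : Type := ((spec -> Prop) * family)%type.

Definition good_germ (g : germ) : Prop := zopen g.1 /\ g.1 P /\ is_sec g.1 g.2.

Definition germ_eq (g h : germ) : Prop :=
  exists W, zopen W /\ W P /\ (forall Q, W Q -> g.1 Q /\ h.1 Q) /\
            agree_on W g.2 h.2.

Definition germ_class (g : germ) : germ -> Prop :=
  fun h => good_germ h /\ germ_eq g h.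

Definition is_germ (c : germ -> Prop) : Prop :=
  exists g, good_germ g /\ c = germ_class g.

Definition stalk_add (c d : germ -> Prop) : germ -> Prop :=
  fun h => exists g1 g2, good_germ g1 /\ good_germ g2 /\
    c = germ_class g1 /\ d = germ_class g2 /\
    germ_class ((fun Q => g1.1 Q /\ g2.1 Q), fam_add g1.2 g2.2) h.

Definition stalk_mul (c d : germ -> Prop) : germ -> Prop :=
  fun h => exists g1 g2, good_germ g1 /\ good_germ g2 /\
    c = germ_class g1 /\ d = germ_class g2 /\
    germ_class ((fun Q => g1.1 Q /\ g2.1 Q), fam_mul g1.2 g2.2) h.

Definition stalk_opp (c : germ -> Prop) : germ -> Prop :=
  fun h => exists g, good_germ g /\ c = germ_class g /\
    germ_class (g.1, fam_opp g.2) h.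

Definition stalk : ring_data :=
  RingData is_germ (germ_class ((fun _ => True), fam_const 0))
    (germ_class ((fun _ => True), fam_const 1)) stalk_add stalk_mul stalk_opp.
End Stalk.

Definition topology_axioms : Prop :=
  zopen (fun _ => False) /\ zopen (fun _ => True) /\
  (forall U V, zopen U -> zopen V -> zopen (fun P => U P /\ V P)) /\
  (forall F : (spec -> Prop) -> Prop, (forall U, F U -> zopen U) ->
     zopen (fun P => exists U, F U /\ U P)).

(* A_X is a presheaf of rings: sections form subrings, restriction preserves
   sections (operations are componentwise, so restrictions are ring maps). *)
Definition presheaf_of_rings : Prop :=
  (forall U, zopen U -> is_sec U (fam_const 0) /\ is_sec U (fam_const 1) /\
     forall g h, is_sec U g -> is_sec U h ->
       is_sec U (fam_add g h) /\ is_sec U (fam_mul g h) /\ is_sec U (fam_opp g)) /\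
  (forall U V g, zopen U -> zopen V -> (forall P, V P -> U P) ->
     is_sec U g -> is_sec V g).

Definition sheaf_axioms : Prop :=
  (forall (I : Type) (Ui : I -> spec -> Prop) (U : spec -> Prop) (g h : family),
     zopen U -> (forall i, zopen (Ui i)) -> (forall P, U P <-> exists i, Ui i P) ->
     is_sec U g -> is_sec U h -> (forall i, agree_on (Ui i) g h) -> agree_on U g h) /\
  (forall (I : Type) (Ui : I -> spec -> Prop) (U : spec -> Prop) (gi : I -> family),
     zopen U -> (forall i, zopen (Ui i)) -> (forall P, U P <-> exists i, Ui i P) ->
     (forall i, is_sec (Ui i) (gi i)) ->
     (forall i j, agree_on (fun P => Ui i P /\ Ui j P) (gi i) (gi j)) ->
     exists g, is_sec U g /\ forall i, agree_on (Ui i) g (gi i)).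

Definition locally_ringed_space : Prop :=
  topology_axioms /\ presheaf_of_rings /\ sheaf_axioms /\
  forall P : spec, local_ring (stalk P).

End Spec.

(* Main.v *)
Require Import Defs.
From mathcomp Require Import all_boot all_algebra ring.
From Stdlib Require Import Classical FunctionalExtensionality PropExtensionality.
Set Implicit Arguments. Unset Strict Implicit. Unset Printing Implicit Defensive.
Import GRing.Theory.
Local Open Scope ring_scope.
Local Notation frac := Defs.frac.

Lemma pext (T : Type) (A B : T -> Prop) : (forall x, A x <-> B x) -> A = B.
Proof. move=> H; apply: functional_extensionality => x; exact: propositional_extensionality. Qed.

Section Frac.
Variables (R : comPzRingType) (p : R -> Prop).
Hypotheses (p0 : p 0) (pD : forall x y, p x -> p y -> p (x + y))
  (pM : forall x y, p y -> p (x * y)) (p1 : ~ p 1)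
  (pP : forall x y, p (x * y) -> p x \/ p y).

Lemma pMn s t : ~ p s -> ~ p t -> ~ p (s * t).
Proof. by move=> hs ht /pP [] . Qed.

Lemma pN x : p x -> p (- x).
Proof. move=> h; have -> : - x = (-1) * x by ring. exact: pM. Qed.

Lemma frac_refl a s : ~ p s -> frac p a s (a, s).
Proof. move=> hs; split=> //; exists 1; split=> //=; ring. Qed.

Lemma frac_trans a s b t : ~ p s -> ~ p t ->
  (exists u, ~ p u /\ u * (a * t - b * s) = 0) -> frac p a s = frac p b t.
Proof.
move=> hs ht [u [hu Hu]].
have sub : forall a s b t, ~ p s -> ~ p t -> (exists u, ~ p u /\ u * (a * t - b * s) = 0) ->
   forall x, frac p a s x -> frac p b t x.
  move=> a1 s1 b1 t1 hs1 ht1 [u1 [hu1 H1]] [c r] [/= hr [u' [hu' H']]].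
  split=> //=; exists (u1 * u' * s1); split; first by apply: pMn => //; apply: pMn.
  have E : u1 * u' * s1 * (b1 * r - c * t1) = r * u' * (u1 * (a1 * t1 - b1 * s1)) * (-1) + t1 * u1 * (u' * (a1 * r - c * s1)) by ring.
  by rewrite E H1 H' !mulr0 mul0r addr0.
apply: pext => x; split; first by apply: sub => //; exists u.
apply: sub => //; exists u; split=> //.
have E : u * (b * s - a * t) = - (u * (a * t - b * s)) by ring.
by rewrite E Hu oppr0.
Qed.

Lemma frac_eq a s b t : ~ p s -> ~ p t ->
  (frac p a s = frac p b t <-> exists u, ~ p u /\ u * (a * t - b * s) = 0).
Proof.
move=> hs ht; split; last exact: frac_trans.
move=> E; have : frac p b t (b, t) by exact: frac_refl.
by rewrite -E => -[_ H].
Qed.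

Lemma loc_add_frac a s b t : ~ p s -> ~ p t ->
  loc_add p (frac p a s) (frac p b t) = frac p (a * t + b * s) (s * t).
Proof.
move=> hs ht; apply: pext => x; split.
  move=> [a' [s' [b' [t' [hs' [ht' [E1 [E2 Hx]]]]]]]].
  suff -> : frac p (a * t + b * s) (s * t) = frac p (a' * t' + b' * s') (s' * t') by [].
  move/(frac_eq _ _ hs hs'): E1 => -[u1 [hu1 H1]].
  move/(frac_eq _ _ ht ht'): E2 => -[u2 [hu2 H2]].
  apply: frac_trans; try by apply: pMn.
  exists (u1 * u2); split; first by apply: pMn.
  have E : u1 * u2 * ((a * t + b * s) * (s' * t') - (a' * t' + b' * s') * (s * t)) =
    t * t' * u2 * (u1 * (a * s' - a' * s)) + s * s' * u1 * (u2 * (b * t' - b' * t)) by ring.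
  by rewrite E H1 H2 !mulr0 addr0.
move=> Hx; exists a, s, b, t; do 4 split => //.
Qed.

Lemma loc_mul_frac a s b t : ~ p s -> ~ p t ->
  loc_mul p (frac p a s) (frac p b t) = frac p (a * b) (s * t).
Proof.
move=> hs ht; apply: pext => x; split.
  move=> [a' [s' [b' [t' [hs' [ht' [E1 [E2 Hx]]]]]]]].
  suff -> : frac p (a * b) (s * t) = frac p (a' * b') (s' * t') by [].
  move/(frac_eq _ _ hs hs'): E1 => -[u1 [hu1 H1]].
  move/(frac_eq _ _ ht ht'): E2 => -[u2 [hu2 H2]].
  apply: frac_trans; try by apply: pMn.
  exists (u1 * u2); split; first by apply: pMn.
  have E : u1 * u2 * (a * b * (s' * t') - a' * b' * (s * t)) =
    b * t' * u2 * (u1 * (a * s' - a' * s)) + a' * s * u1 * (u2 * (b * t' - b' * t)) by ring.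
  by rewrite E H1 H2 !mulr0 addr0.
move=> Hx; exists a, s, b, t; do 4 split => //.
Qed.

Lemma loc_opp_frac a s : ~ p s -> loc_opp p (frac p a s) = frac p (- a) s.
Proof.
move=> hs; apply: pext => x; split.
  move=> [a' [s' [hs' [E1 Hx]]]].
  suff -> : frac p (- a) s = frac p (- a') s' by [].
  move/(frac_eq _ _ hs hs'): E1 => -[u1 [hu1 H1]].
  apply: frac_trans => //; exists u1; split => //.
  have E : u1 * (- a * s' - - a' * s) = - (u1 * (a * s' - a' * s)) by ring.
  by rewrite E H1 oppr0.
move=> Hx; exists a, s; do 2 split => //.
Qed.

Definition locm : (R * R -> Prop) -> Prop :=
  fun c => exists a s, ~ p s /\ c = frac p a s /\ p a.

Lemma locm_frac a s : ~ p s -> locm (frac p a s) -> p a.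
Proof.
move=> hs [a' [s' [hs' [E pa']]]].
move/(frac_eq _ _ hs hs'): E => -[u [hu H]].
have : p (u * (a * s' - a' * s)) by rewrite H.
case/pP => // hd.
have : p (a * s').
  have -> : a * s' = (a * s' - a' * s) + a' * s by ring.
  by apply: pD => //; rewrite mulrC; apply: pM.
by case/pP => // /hs'.
Qed.

Lemma inv_one a s : ~ p s -> ~ p a -> loc_mul p (frac p s a) (frac p a s) = frac p 1 1.
Proof.
move=> hs ha; rewrite loc_mul_frac //; apply: frac_trans => //; first by apply: pMn.
by exists 1; split => //; ring.
Qed.

Lemma loc_local : local_ring (loc_ring p).
Proof.
have nonunit : forall J : (R * R -> Prop) -> Prop, ideal (A:=loc_ring p) J -> ~ J (frac p 1 1) ->
    forall x, J x -> locm x.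
  move=> J [Jd [_ [_ JM]]] J1 x Jx.
  have [a [s [hs Ex]]] := Jd x Jx.
  exists a, s; do 2 split => //.
  apply: NNPP => ha; apply: J1; rewrite -(inv_one hs ha).
  apply: JM; first by exists s, a.
  by rewrite -Ex.
have mid : ideal (A:=loc_ring p) locm.
  split; first by move=> x [a [s [hs [E _]]]]; exists a, s.
  split; first by exists 0, 1; do 2 split => //.
  split.
    move=> x y [a [s [hs [-> pa]]]] [b [t [ht [-> pb]]]] /=.
    rewrite loc_add_frac //; exists (a * t + b * s), (s * t); split; first by apply: pMn.
    split => //; apply: pD; rewrite mulrC; exact: pM.
  move=> r x [c [v [hv ->]]] [a [s [hs [-> pa]]]] /=.
  rewrite loc_mul_frac //; exists (c * a), (v * s); split; first by apply: pMn.
  by split => //; apply: pM.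
have m1 : ~ locm (frac p 1 1).
  move=> /(locm_frac (a:=1) (s:=1) p1) //.
exists locm; split.
  split => //; split => //.
  move=> J HJ _ J1 x Jx; exact: nonunit J HJ J1 x Jx.
move=> m' [Hm' [m'1 Hmax]] x; split; first exact: nonunit Hm' m'1 x.
apply: Hmax => //; exact: nonunit Hm' m'1.
Qed.

End Frac.


Section Top.
Variables (R : comPzRingType) (M : lmodType R).
Implicit Types (P Q : spec M).

Notation cq P := (colon (proj1_sig P)).

Lemma cq0 P : cq P 0.
Proof. case: P => P [[P0 _] _] m /=; by rewrite scale0r. Qed.
Lemma cqD P x y : cq P x -> cq P y -> cq P (x + y).
Proof. case: P => P [[_ [PD _]] _] /= hx hy m; rewrite scalerDl; exact: PD. Qed.
Lemma cqM P x y : cq P y -> cq P (x * y).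
Proof. case: P => P [[_ [_ PZ]] _] /= hy m; rewrite -scalerA; exact: PZ. Qed.
Lemma cq1 P : ~ cq P 1.
Proof. case: P => P [_ [[m hm] _]] /= h; apply: hm; move: (h m); by rewrite scale1r. Qed.
Lemma cqP P x y : cq P (x * y) -> cq P x \/ cq P y.
Proof.
case: P => P [_ [_ Pp]] /= h.
case: (classic (colon P x)) => hx; [by left|right] => m.
case: (Pp x (y *: m)) => //; by rewrite scalerA.
Qed.
Lemma cqMn P s t : ~ cq P s -> ~ cq P t -> ~ cq P (s * t).
Proof. by move=> hs ht /cqP []. Qed.

Lemma submod_P P : submod (proj1_sig P).
Proof. exact: (proj1 (proj2_sig P)). Qed.

Lemma zopen_sat U P Q : zopen U -> (forall r, cq P r <-> cq Q r) -> U P -> U Q.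
Proof.
move=> [L [_ HL]] E /HL hP; apply/HL => hQ; apply: hP => r /hQ h; exact: (proj2 (E r)).
Qed.

Lemma zopen_D (u : R) : zopen (fun Q : spec M => ~ cq Q u).
Proof.
exists (fun m => exists m', m = u *: m'); split.
  split; first by exists 0; rewrite scaler0.
  split; first by move=> x y [x' ->] [y' ->]; exists (x' + y'); rewrite scalerDr.
  by move=> r x [x' ->]; exists (r *: x'); rewrite !scalerA mulrC.
move=> Q; split=> h1 h2; apply: h1.
  apply: h2 => m; by exists m.
move=> r hr m; case: (hr m) => m' ->.
have [_ [_ PZ]] := submod_P Q; exact: h2.
Qed.

Lemma zopen_T : zopen (fun _ : spec M => True).
Proof.
exists (fun _ => True); split; first by split=> //.
move=> Q; split=> // _ h; apply: (@cq1 Q); exact: h.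
Qed.

Lemma zopen_0 : zopen (fun _ : spec M => False).
Proof.
exists (fun m => m = 0); split.
  split=> //; split; first by move=> x y -> ->; rewrite addr0.
  by move=> r x ->; rewrite scaler0.
move=> Q; split=> // h; apply: h => r hr m; rewrite (hr m).
by have [P0 _] := submod_P Q.
Qed.

Lemma zopen_I U V : zopen U -> zopen V -> zopen (fun P => U P /\ V P).
Proof.
move=> [L1 [S1 H1]] [L2 [S2 H2]].
exists (fun m => L1 m /\ L2 m); split.
  case: S1 => [a1 [b1 c1]]; case: S2 => [a2 [b2 c2]].
  split; first by [].
  split; first by move=> x y [] ? ? [] ? ?; split; [apply: b1|apply: b2].
  by move=> r x [] ? ?; split; [apply: c1|apply: c2].
move=> Q; rewrite H1 H2; split.
  move=> [n1 n2] hV.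
  apply: n1 => r1 h1r1; apply: NNPP => nr1.
  apply: n2 => r2 h2r2; apply: NNPP => nr2.
  have := hV (r1 * r2).
  case/(_ _)/cqP => //.
  move=> m; split; first by rewrite -scalerA; exact: h1r1.
  by rewrite mulrC -scalerA; exact: h2r2.
move=> nV; split=> hV; apply: nV => r hr.
  by apply: hV => m; case: (hr m).
by apply: hV => m; case: (hr m).
Qed.

Lemma zopen_U (F : (spec M -> Prop) -> Prop) : (forall U, F U -> zopen U) ->
  zopen (fun P => exists U, F U /\ U P).
Proof.
move=> HF.
pose S := fun x : M => exists U L r m, F U /\ submod L /\ (forall P, U P <-> ~ Vset L P) /\
   colon L r /\ x = r *: m.
exists (fun x => forall N, submod N -> (forall y, S y -> N y) -> N x); split.
  split; first by move=> N [N0 _].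
  split; first by move=> x y hx hy N SN hS; have [N0 [ND NZ]] := SN; apply: ND; [exact: hx SN hS|exact: hy SN hS].
  by move=> r x hx N SN hS; have [N0 [ND NZ]] := SN; apply: NZ; exact: hx SN hS.
move=> Q; split.
  move=> [U [FU UQ]] hV.
  have [L [SL HL]] := HF U FU.
  apply: (proj1 (HL Q) UQ) => r hr.
  apply: hV => m N SN hS; apply: hS; exists U, L, r, m; exact: (conj FU (conj SL (conj HL (conj hr erefl)))).
move=> nV; apply: NNPP => nU; apply: nV => r hr m.
apply: (hr m) (submod_P Q) _.
move=> y [U [L [r' [m' [FU [SL [HL [hr' ->]]]]]]]].
have : ~ U Q by move=> UQ; apply: nU; exists U.
rewrite HL => /NNPP hV; exact: hV.
Qed.

Lemma topo : topology_axioms M.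
Proof. split; first exact: zopen_0. split; first exact: zopen_T. split; first exact: zopen_I. exact: zopen_U. Qed.

End Top.


Section Sh.
Variables (R : comPzRingType) (M : lmodType R).
Implicit Types (P Q : spec M) (U V W : spec M -> Prop) (g h : Defs.family R).
Local Notation cq P := (colon (proj1_sig P)).

Ltac closep := first [exact: cq0 | exact: cqD | exact: cqM | exact: cq1 | exact: cqP | assumption].

Lemma cq_add P a s b t : ~ cq P s -> ~ cq P t ->
  loc_add (cq P) (frac (cq P) a s) (frac (cq P) b t) = frac (cq P) (a * t + b * s) (s * t).
Proof. move=> hs ht; apply: loc_add_frac; closep. Qed.
Lemma cq_mul P a s b t : ~ cq P s -> ~ cq P t ->
  loc_mul (cq P) (frac (cq P) a s) (frac (cq P) b t) = frac (cq P) (a * b) (s * t).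
Proof. move=> hs ht; apply: loc_mul_frac; closep. Qed.
Lemma cq_opp P a s : ~ cq P s ->
  loc_opp (cq P) (frac (cq P) a s) = frac (cq P) (- a) s.
Proof. move=> hs; apply: loc_opp_frac; closep. Qed.
Lemma cq_eq P a s b t : ~ cq P s -> ~ cq P t ->
  (frac (cq P) a s = frac (cq P) b t <-> exists u, ~ cq P u /\ u * (a * t - b * s) = 0).
Proof. move=> hs ht; apply: frac_eq; closep. Qed.
Lemma cq_refl P a s : ~ cq P s -> frac (cq P) a s (a, s).
Proof. move=> hs; apply: frac_refl; closep. Qed.

Lemma sat_cq U P Q : zopen U -> cq P = cq Q -> U P -> U Q.
Proof. move=> hU E; apply: zopen_sat => // r; by rewrite E. Qed.

Lemma sec_const U c : zopen U -> is_sec U (fam_const c).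
Proof.
move=> hU Q UQ; exists U; split => //; split => //; split => //.
exists c, 1 => P _; split; first exact: cq1.
by [].
Qed.

Lemma sec_ops U g h : zopen U -> is_sec U g -> is_sec U h ->
  is_sec U (fam_add g h) /\ is_sec U (fam_mul g h) /\ is_sec U (fam_opp g).
Proof.
move=> hU Hg Hh; split; last split.
- move=> Q UQ.
  have [W1 [o1 [w1 [s1 [a [s Ha]]]]]] := Hg Q UQ.
  have [W2 [o2 [w2 [s2 [b [t Hb]]]]]] := Hh Q UQ.
  exists (fun P => W1 P /\ W2 P); split; first exact: zopen_I.
  split; first by [].
  split; first by move=> P [/s1].
  exists (a * t + b * s), (s * t) => P [/Ha [hs ea] /Hb [ht eb]].
  split; first exact: cqMn.
  by rewrite /fam_add ea eb cq_add.
- move=> Q UQ.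
  have [W1 [o1 [w1 [s1 [a [s Ha]]]]]] := Hg Q UQ.
  have [W2 [o2 [w2 [s2 [b [t Hb]]]]]] := Hh Q UQ.
  exists (fun P => W1 P /\ W2 P); split; first exact: zopen_I.
  split; first by [].
  split; first by move=> P [/s1].
  exists (a * b), (s * t) => P [/Ha [hs ea] /Hb [ht eb]].
  split; first exact: cqMn.
  by rewrite /fam_mul ea eb cq_mul.
- move=> Q UQ.
  have [W1 [o1 [w1 [s1 [a [s Ha]]]]]] := Hg Q UQ.
  exists W1; do 3 split => //.
  exists (- a), s => P /Ha [hs ea].
  split => //.
  by rewrite /fam_opp ea cq_opp.
Qed.

Lemma sec_restr U V g : (forall P, V P -> U P) -> zopen V -> is_sec U g -> is_sec V g.
Proof.
move=> VU hV Hg Q VQ.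
have [W [oW [wQ [sW [a [s Ha]]]]]] := Hg Q (VU Q VQ).
exists (fun P => W P /\ V P); split; first exact: zopen_I.
split => //; split; first by move=> P [].
by exists a, s => P [/Ha].
Qed.

Lemma presheaf : presheaf_of_rings M.
Proof.
split.
  move=> U hU; split; first exact: sec_const.
  split; first exact: sec_const.
  move=> g h; exact: sec_ops.
move=> U V g _ hV VU; exact: sec_restr.
Qed.

Lemma sheaf : sheaf_axioms M.
Proof.
split.
  move=> I Ui U g h hU hUi HU _ _ Hag q [P [UP ->]].
  have [i UiP] := proj1 (HU P) UP.
  apply: (Hag i); by exists P.
move=> I Ui U gi hU hUi HU Hs Hag.
pose g : Defs.family R := fun q x => exists i, Supp (Ui i) q /\ gi i q x.
have key : forall i q, Supp (Ui i) q -> g q = gi i q.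
  move=> i q Sq; apply: pext => x; split; last by move=> hx; exists i.
  move=> [j [[P' [UjP' Eq']] hx]].
  case: Sq => P [UiP Eq].
  have UjP : Ui j P by apply: sat_cq (hUi j) _ UjP'; rewrite -Eq -Eq'.
  have : agree_on (fun P => Ui i P /\ Ui j P) (gi i) (gi j) by exact: Hag.
  move=> /(_ q) ->; first by [].
  by exists P.
exists g; split; last first.
  by move=> i q Sq; apply: key.
move=> Q UQ.
have [i UiQ] := proj1 (HU Q) UQ.
have [W [oW [wQ [sW [a [s Ha]]]]]] := Hs i Q UiQ.
exists W; split => //; split => //; split.
  move=> P WP; apply/HU; exists i; exact: sW.
exists a, s => P WP; have [hs ea] := Ha P WP; split => //.
rewrite (key i); first by [].
by exists P; split => //; apply: sW.
Qed.

End Sh.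


Lemma iso_local (A B : ring_data) :
  rdom A (rzero A) -> rdom A (rone A) ->
  (forall x y, rdom A x -> rdom A y -> rdom A (radd A x y)) ->
  (forall x y, rdom A x -> rdom A y -> rdom A (rmul A x y)) ->
  ring_iso A B -> local_ring B -> local_ring A.
Proof.
move=> d0 d1 dD dM [f [fd [finj [fsur [f0 [f1 [fop _]]]]]]] [mB [[HmB [mB1 mBmax]] mBu]].
have pre : forall J, ideal (A:=B) J -> ideal (A:=A) (fun x => rdom A x /\ J (f x)).
  move=> J [Jd [J0 [JD JM]]]; split; first by move=> x [].
  split; first by rewrite f0.
  split.
    move=> x y [dx Jx] [dy Jy]; split; first exact: dD.
    by rewrite (proj1 (fop x y dx dy)); apply: JD.
  move=> r x dr [dx Jx]; split; first exact: dM.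
  by rewrite (proj2 (fop r x dr dx)); apply: JM => //; apply: fd.
have img : forall I, ideal (A:=A) I -> ideal (A:=B) (fun y => exists x, I x /\ f x = y).
  move=> I [Id [I0 [ID IM]]]; split; first by move=> y [x [Ix <-]]; apply: fd; apply: Id.
  split; first by exists (rzero A).
  split.
    move=> y y' [x [Ix <-]] [x' [Ix' <-]]; exists (radd A x x'); split; first exact: ID.
    by rewrite (proj1 (fop x x' (Id _ Ix) (Id _ Ix'))).
  move=> r y dr [x [Ix <-]]; have [r' [dr' <-]] := fsur r dr.
  exists (rmul A r' x); split; first exact: IM.
  by rewrite (proj2 (fop r' x dr' (Id _ Ix))).
exists (fun x => rdom A x /\ mB (f x)).
have HmA := pre mB HmB.
split.
  split => //; split; first by rewrite f1 => -[].
  move=> J HJ sub J1 x Jx.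
  have dx : rdom A x by case: HJ => Jd _; apply: Jd.
  split => //.
  apply: (mBmax _ (img J HJ)).
  - move=> y my; have [x' [dx' E]] := fsur y (proj1 HmB y my).
    exists x'; split => //; apply: sub; split => //; by rewrite E.
  - move=> [x' [Jx' E]]; apply: J1.
    have dx' : rdom A x' by case: HJ => Jd _; apply: Jd.
    by rewrite -(finj x' (rone A) dx' d1) // f1.
  - by exists x.
move=> m' [Hm' [m'1 m'max]].
have dm : forall x, m' x -> rdom A x by case: Hm' => Jd _.
have maxI : maximal_ideal (A:=B) (fun y => exists x, m' x /\ f x = y).
  split; first exact: img.
  split.
    move=> [x [mx E]]; apply: m'1.
    by rewrite -(finj x (rone A) (dm x mx) d1) // f1.
  move=> J HJ sub J1 y Jy.
  have dy : rdom B y by case: HJ => Jd _; apply: Jd.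
  have [x [dx E]] := fsur y dy.
  exists x; split => //.
  apply: (m'max _ (pre J HJ)).
  - move=> z mz; split; first exact: dm.
    by apply: sub; exists z.
  - by rewrite f1 => -[].
  - by split => //; rewrite E.
have U := mBu _ maxI.
move=> x; split.
  move=> mx; split; first exact: dm.
  apply/U; by exists x.
move=> [dx mx]; have [x' [mx' E]] := proj2 (U (f x)) mx.
by rewrite -(finj x' x (dm x' mx') dx E).
Qed.


Section St.
Variables (R : comPzRingType) (M : lmodType R) (P : spec M).
Local Notation cq P := (colon (proj1_sig P)).
Local Notation q := (cq P).
Local Notation germ := (germ M).
Implicit Types (g h : germ).

Lemma geq_sym g h : germ_eq P g h -> germ_eq P h g.
Proof.
move=> [W [oW [WP [sW ag]]]]; exists W; do 2 split => //; split.
  by move=> Q /sW [].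
by move=> q' /ag ->.
Qed.

Lemma geq_trans g h k : germ_eq P g h -> germ_eq P h k -> germ_eq P g k.
Proof.
move=> [W [oW [WP [sW ag]]]] [W' [oW' [WP' [sW' ag']]]].
exists (fun Q => W Q /\ W' Q); split; first exact: zopen_I.
split => //; split.
  by move=> Q [/sW [] ? _ /sW' [] _ ?].
move=> q' [Q [[WQ W'Q] ->]]; rewrite ag; last by exists Q.
by rewrite ag'; last by exists Q.
Qed.

Lemma geq_refl g : good_germ P g -> germ_eq P g g.
Proof. move=> [o [gP _]]; exists g.1; by do 3 split => //. Qed.

Lemma class_eq g h : germ_eq P g h -> germ_class P g = germ_class P h.
Proof.
move=> E; apply: pext => x; split => -[gx ex]; split => //.
  exact: geq_trans (geq_sym E) ex.
exact: geq_trans E ex.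
Qed.

Lemma class_inv g h : good_germ P h -> germ_class P g = germ_class P h -> germ_eq P g h.
Proof.
move=> gh E; have : germ_class P h h by split => //; exact: geq_refl.
by rewrite -E => -[].
Qed.

Lemma geq_val g h : germ_eq P g h -> g.2 q = h.2 q.
Proof. move=> [W [oW [WP [sW ag]]]]; apply: ag; by exists P. Qed.

Lemma good_val g : good_germ P g -> exists a s, ~ q s /\ g.2 q = frac q a s.
Proof.
move=> [o [gP sec]]; have [W [_ [WP [_ [a [s H]]]]]] := sec P gP.
by exists a, s; apply: H.
Qed.

Lemma good_op2 (op : Defs.family R -> Defs.family R -> Defs.family R) g1 g2 :
  (forall (U : spec M -> Prop) (f1 f2 : Defs.family R), zopen U -> is_sec U f1 -> is_sec U f2 -> is_sec U (op f1 f2)) ->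
  good_germ P g1 -> good_germ P g2 ->
  good_germ P ((fun Q => g1.1 Q /\ g2.1 Q), op g1.2 g2.2).
Proof.
move=> Hop [o1 [p1 s1]] [o2 [p2 s2]].
have oI : zopen (fun Q => g1.1 Q /\ g2.1 Q) by exact: zopen_I.
split => //; split => //=.
apply: Hop => //.
  by apply: sec_restr s1 => // Q [].
by apply: sec_restr s2 => // Q [].
Qed.

Lemma class_op2 (F : (R -> Prop) -> (R * R -> Prop) -> (R * R -> Prop) -> (R * R -> Prop))
  g1 g2 g1' g2' : germ_eq P g1 g1' -> germ_eq P g2 g2' ->
  germ_eq P ((fun Q => g1.1 Q /\ g2.1 Q), fun q' => F q' (g1.2 q') (g2.2 q'))
            ((fun Q => g1'.1 Q /\ g2'.1 Q), fun q' => F q' (g1'.2 q') (g2'.2 q')).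
Proof.
move=> [W [oW [WP [sW ag]]]] [W' [oW' [WP' [sW' ag']]]].
exists (fun Q => W Q /\ W' Q); split; first exact: zopen_I.
split => //; split.
  move=> Q [/sW [] ? ? /sW' [] ? ?]; by do 2 split.
move=> q' [Q [[WQ W'Q] ->]] /=; rewrite ag; last by exists Q.
by rewrite ag'; last by exists Q.
Qed.

Lemma sec_add (U : spec M -> Prop) (f1 f2 : Defs.family R) : zopen U -> is_sec U f1 -> is_sec U f2 -> is_sec U (fam_add f1 f2).
Proof. by move=> *; apply: (proj1 (sec_ops _ _ _)). Qed.
Lemma sec_mul (U : spec M -> Prop) (f1 f2 : Defs.family R) : zopen U -> is_sec U f1 -> is_sec U f2 -> is_sec U (fam_mul f1 f2).
Proof. by move=> *; apply: (proj1 (proj2 (sec_ops _ _ _))). Qed.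

Lemma stalk_add_class g1 g2 : good_germ P g1 -> good_germ P g2 ->
  stalk_add P (germ_class P g1) (germ_class P g2) =
  germ_class P ((fun Q => g1.1 Q /\ g2.1 Q), fam_add g1.2 g2.2).
Proof.
move=> G1 G2; apply: pext => x; split; last first.
  by move=> hx; exists g1, g2.
move=> [g1' [g2' [G1' [G2' [E1 [E2 hx]]]]]].
rewrite (class_eq (class_op2 (loc_add (R:=R)) (class_inv G1' E1) (class_inv G2' E2))).
exact: hx.
Qed.

Lemma stalk_mul_class g1 g2 : good_germ P g1 -> good_germ P g2 ->
  stalk_mul P (germ_class P g1) (germ_class P g2) =
  germ_class P ((fun Q => g1.1 Q /\ g2.1 Q), fam_mul g1.2 g2.2).
Proof.
move=> G1 G2; apply: pext => x; split; last first.
  by move=> hx; exists g1, g2.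
move=> [g1' [g2' [G1' [G2' [E1 [E2 hx]]]]]].
rewrite (class_eq (class_op2 (loc_mul (R:=R)) (class_inv G1' E1) (class_inv G2' E2))).
exact: hx.
Qed.

Lemma good_opp g : good_germ P g -> good_germ P (g.1, fam_opp g.2).
Proof.
move=> [o [gP s]]; split => //; split => //=.
exact: (proj2 (proj2 (sec_ops o s s))).
Qed.

Lemma stalk_opp_class g : good_germ P g ->
  stalk_opp P (germ_class P g) = germ_class P (g.1, fam_opp g.2).
Proof.
move=> G; apply: pext => x; split; last first.
  by move=> hx; exists g.
move=> [g' [G' [E hx]]].
suff -> : germ_class P (g.1, fam_opp g.2) = germ_class P (g'.1, fam_opp g'.2) by [].
apply: class_eq.
have [W [oW [WP [sW ag]]]] := class_inv G' E.
exists W; do 2 split => //; split => //.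
move=> q' Sq /=; by rewrite /fam_opp ag.
Qed.

Lemma good_const c : good_germ P ((fun _ => True), fam_const c).
Proof. split; first exact: zopen_T. split => //; exact: sec_const (zopen_T M). Qed.

Definition fiso (c : germ -> Prop) : R * R -> Prop :=
  fun x => exists g, good_germ P g /\ c = germ_class P g /\ g.2 q x.

Lemma fiso_class g : good_germ P g -> fiso (germ_class P g) = g.2 q.
Proof.
move=> G; apply: pext => x; split; last by move=> hx; exists g.
move=> [g' [G' [E hx]]]; by rewrite (geq_val (class_inv G' E)).
Qed.

Lemma stalk_iso : ring_iso (stalk P) (loc_ring q).
Proof.
exists fiso; split.
  move=> c [g [G ->]]; rewrite fiso_class //.
  have [a [s [hs ->]]] := good_val G; by exists a, s.
split.
  move=> c d [g [G ->]] [h [H ->]]; rewrite !fiso_class // => Egh.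
  apply: class_eq.
  have [o1 [p1 s1]] := G; have [o2 [p2 s2]] := H.
  have [W1 [oW1 [W1P [sW1 [a [s Ha]]]]]] := s1 P p1.
  have [W2 [oW2 [W2P [sW2 [b [t Hb]]]]]] := s2 P p2.
  have [hs ea] := Ha P W1P; have [ht eb] := Hb P W2P.
  have := Egh; rewrite ea eb cq_eq // => -[u [hu Hu]].
  exists (fun Q => (W1 Q /\ W2 Q) /\ ~ cq Q u); split.
    apply: zopen_I; [exact: zopen_I | exact: zopen_D].
  split => //; split.
    by move=> Q [[/sW1 ? /sW2 ?] _].
  move=> q' [Q [[[W1Q W2Q] hQ] ->]].
  have [hs' ea'] := Ha Q W1Q; have [ht' eb'] := Hb Q W2Q.
  rewrite ea' eb'; apply/cq_eq => //; by exists u.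
split.
  move=> y [a [s [hs ->]]].
  exists (germ_class P ((fun Q => ~ cq Q s), fun q' => frac q' a s)).
  have G : good_germ P ((fun Q => ~ cq Q s), fun q' => frac q' a s).
    split; first exact: zopen_D.
    split => //= Q hQ; exists (fun Q => ~ cq Q s); split; first exact: zopen_D.
    by do 2 split => //; exists a, s.
  split; first by exists ((fun Q => ~ cq Q s), fun q' => frac q' a s).
  by rewrite fiso_class.
split; first by rewrite fiso_class //; exact: good_const.
split; first by rewrite fiso_class //; exact: good_const.
split.
  move=> c d [g [G ->]] [h [H ->]] /=; split.
    rewrite stalk_add_class // fiso_class; last by apply: good_op2 => //; exact: sec_add.
    by rewrite !fiso_class.
  rewrite stalk_mul_class // fiso_class; last by apply: good_op2 => //; exact: sec_mul.
  by rewrite !fiso_class.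
move=> c [g [G ->]] /=.
by rewrite stalk_opp_class // fiso_class ?fiso_class //; exact: good_opp.
Qed.

Lemma stalk_local : local_ring (stalk P).
Proof.
apply: (iso_local (B := loc_ring q)).
- exists ((fun _ => True), fam_const 0); split => //; exact: good_const.
- exists ((fun _ => True), fam_const 1); split => //; exact: good_const.
- move=> x y [g [G ->]] [h [H ->]] /=; rewrite stalk_add_class //.
  eexists; split; last reflexivity; apply: good_op2 => //; exact: sec_add.
- move=> x y [g [G ->]] [h [H ->]] /=; rewrite stalk_mul_class //.
  eexists; split; last reflexivity; apply: good_op2 => //; exact: sec_mul.
- exact: stalk_iso.
apply: loc_local.
- exact: cq0.
- exact: cqD.
- exact: cqM.
- exact: cq1.
- exact: cqP.
Qed.

End St.

Theorem corollary3p4 (R : comPzRingType) (M : lmodType R)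
  (hX : exists P : M -> Prop, prime_submod P) :
  (forall P : spec M,
     ring_iso (stalk P) (loc_ring (colon (proj1_sig P)))) /\
  locally_ringed_space M.
Proof.
split; first exact: stalk_iso.
split; first exact: topo.
split; first exact: presheaf.
split; first exact: sheaf.
exact: stalk_local.
Qed.
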